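(* Let $\xi:[a,b]\to\mathbb{R}^3$ be as in the context with $k>0$, $\tau\neq0$ and $\sigma\neq0$ on $[a,b]$, and let $e$ be its evolute. Then $$\int_a^b k_e\,\|e'\|\,dt=\int_a^b|\tau|\,dt,\qquad \int_a^b \tau_e\,\|e'\|\,dt=\int_a^b \operatorname{sgn}(\sigma)\,k\,dt .$$ That is, the total curvature of the evolute equals the total absolute torsion of $\xi$, and the total torsion of the evolute equals the total curvature of $\xi$ taken with the sign of $\sigma$.
   Context: $\xi$ is a smooth arclength-parametrized space curve with curvature $k>0$, $r=1/k$, torsion $\tau$ and Frenet frame $(\mathbf{t},\mathbf{n},\mathbf{b})$. Its evolute is $e=\xi+r\mathbf{n}+\frac{r'}{\tau}\mathbf{b}$, and $\sigma=r\tau+\left(\frac{r'}{\tau}\right)'$. Here $k_e,\tau_e$ denote the curvature and torsion of $e$ at $e(t)$. *)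

(* Defs.v *)
From Stdlib Require Import Reals.
From Coquelicot Require Import Coquelicot.
Open Scope R_scope.

Definition vec : Type := (R * R * R)%type.
Definition vx (v : vec) : R := fst (fst v).
Definition vy (v : vec) : R := snd (fst v).
Definition vz (v : vec) : R := snd v.
Definition mkv (x y z : R) : vec := (x, y, z).

Definition vadd (u v : vec) : vec := mkv (vx u + vx v) (vy u + vy v) (vz u + vz v).
Definition vscale (c : R) (v : vec) : vec := mkv (c * vx v) (c * vy v) (c * vz v).
Definition dot (u v : vec) : R := vx u * vx v + vy u * vy v + vz u * vz v.
Definition cross (u v : vec) : vec :=
  mkv (vy u * vz v - vz u * vy v) (vz u * vx v - vx u * vz v) (vx u * vy v - vy u * vx v).
Definition vnorm (v : vec) : R := sqrt (dot v v).
Definition det3 (u v w : vec) : R := dot u (cross v w).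

Definition vderive (f : R -> vec) (t : R) : vec :=
  mkv (Derive (fun s => vx (f s)) t) (Derive (fun s => vy (f s)) t)
      (Derive (fun s => vz (f s)) t).

Definition smooth_on (c d : R) (f : R -> vec) : Prop :=
  forall (n : nat) (t : R), c < t < d ->
    ex_derive_n (fun s => vx (f s)) n t /\
    ex_derive_n (fun s => vy (f s)) n t /\
    ex_derive_n (fun s => vz (f s)) n t.

(* Frenet apparatus of an arclength-parametrized curve xi *)
Definition tangent (xi : R -> vec) (t : R) : vec := vderive xi t.
Definition curvature (xi : R -> vec) (t : R) : R := vnorm (vderive (vderive xi) t).
Definition radius (xi : R -> vec) (t : R) : R := / curvature xi t.
Definition normal (xi : R -> vec) (t : R) : vec :=
  vscale (/ curvature xi t) (vderive (vderive xi) t).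
Definition binormal (xi : R -> vec) (t : R) : vec := cross (tangent xi t) (normal xi t).
(* Frenet: n' = - k t + tau b *)
Definition torsion (xi : R -> vec) (t : R) : R :=
  dot (vderive (normal xi) t) (binormal xi t).

Definition evolute (xi : R -> vec) (t : R) : vec :=
  vadd (xi t) (vadd (vscale (radius xi t) (normal xi t))
                    (vscale (Derive (radius xi) t / torsion xi t) (binormal xi t))).

Definition sigma_fn (xi : R -> vec) (t : R) : R :=
  radius xi t * torsion xi t + Derive (fun s => Derive (radius xi) s / torsion xi s) t.

Definition gen_curvature (e : R -> vec) (t : R) : R :=
  vnorm (cross (vderive e t) (vderive (vderive e) t)) / (vnorm (vderive e t)) ^ 3.
Definition gen_torsion (e : R -> vec) (t : R) : R :=
  det3 (vderive e t) (vderive (vderive e) t) (vderive (vderive (vderive e)) t)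
  / (vnorm (cross (vderive e t) (vderive (vderive e) t))) ^ 2.

Definition sgn (x : R) : R :=
  if Rlt_dec 0 x then 1 else if Rlt_dec x 0 then -1 else 0.

(* Main.v *)
Require Import Defs.
From Stdlib Require Import Reals Lra.
From Coquelicot Require Import Coquelicot.
Open Scope R_scope.

Lemma isd_plus (f g : R -> R) (t df dg : R) : is_derive f t df -> is_derive g t dg ->
  is_derive (fun s => f s + g s) t (df + dg).
Proof. intros; apply (is_derive_plus f g); auto. Qed.
Lemma isd_mult (f g : R -> R) (t df dg : R) : is_derive f t df -> is_derive g t dg ->
  is_derive (fun s => f s * g s) t (df * g t + f t * dg).
Proof. intros. apply (is_derive_mult f g t df dg); auto. intros; apply Rmult_comm. Qed.
Lemma isd_opp (f : R -> R) (t df : R) : is_derive f t df -> is_derive (fun s => - f s) t (- df).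
Proof. intros; apply (is_derive_opp f); auto. Qed.
Lemma isd_const (c : R) t : is_derive (fun _ => c) t 0.
Proof. apply (is_derive_const c). Qed.

Lemma loc_I a b t : a < t < b -> locally t (fun s => a < s < b).
Proof. intros H. apply (open_and _ _ (open_gt a) (open_lt b)); auto. Qed.
Lemma loc_eq a b (f g : R -> R) t : a < t < b -> (forall s, a < s < b -> f s = g s) ->
  locally t (fun s => f s = g s).
Proof. intros H E. eapply filter_imp; [|apply (loc_I a b t H)]. auto. Qed.

Fixpoint Dk (a b : R) (k : nat) (f : R -> R) : Prop :=
  match k with
  | O => True
  | S k => (forall t, a < t < b -> ex_derive f t) /\ Dk a b k (Derive f)
  end.

Section Sm.
Variables a b : R.

Lemma Dk_ext k : forall f g, (forall s, a < s < b -> f s = g s) -> Dk a b k f -> Dk a b k g.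
Proof.
  induction k; simpl; auto. intros f g E [H1 H2]. split.
  - intros t Ht. apply ex_derive_ext_loc with f; [apply (loc_eq a b); auto| auto].
  - apply IHk with (Derive f); auto. intros s Hs. apply Derive_ext_loc. apply (loc_eq a b); auto.
Qed.

Lemma Dk_S k : forall f, Dk a b (S k) f -> Dk a b k f.
Proof. induction k; simpl; intros f H; auto. destruct H as [H1 H2]. split; auto. Qed.

Lemma Dk_isd k f t : Dk a b (S k) f -> a < t < b -> is_derive f t (Derive f t).
Proof. simpl. intros [H _] Ht. apply Derive_correct; auto. Qed.

Lemma Dk_const k : forall c : R, Dk a b k (fun _ => c).
Proof.
  induction k; simpl; auto. intros c; split.
  - intros t _. eexists; apply isd_const.
  - apply Dk_ext with (fun _ => 0); auto. intros s _. symmetry. apply is_derive_unique, isd_const.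
Qed.

Lemma Dk_plus k : forall f g, Dk a b k f -> Dk a b k g -> Dk a b k (fun s => f s + g s).
Proof.
  induction k; simpl; auto. intros f g [F1 F2] [G1 G2]. split.
  - intros t Ht. eexists. apply isd_plus; apply Derive_correct; auto.
  - apply Dk_ext with (fun s => Derive f s + Derive g s); auto.
    intros s Hs. symmetry. apply is_derive_unique, isd_plus; apply Derive_correct; auto.
Qed.

Lemma Dk_opp k : forall f, Dk a b k f -> Dk a b k (fun s => - f s).
Proof.
  induction k; simpl; auto. intros f [F1 F2]. split.
  - intros t Ht. eexists. apply isd_opp; apply Derive_correct; auto.
  - apply Dk_ext with (fun s => - Derive f s); auto.
    intros s Hs. symmetry. apply is_derive_unique, isd_opp; apply Derive_correct; auto.
Qed.

Lemma Dk_mult k : forall f g, Dk a b k f -> Dk a b k g -> Dk a b k (fun s => f s * g s).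
Proof.
  induction k; simpl; auto. intros f g F G.
  pose proof (Dk_S _ _ F) as F0. pose proof (Dk_S _ _ G) as G0.
  destruct F as [F1 F2], G as [G1 G2]. split.
  - intros t Ht. eexists. apply isd_mult; apply Derive_correct; auto.
  - apply Dk_ext with (fun s => Derive f s * g s + f s * Derive g s).
    + intros s Hs. symmetry. apply is_derive_unique, isd_mult; apply Derive_correct; auto.
    + apply Dk_plus; apply IHk; auto.
Qed.

Lemma Dk_inv k : forall f, (forall s, a < s < b -> f s <> 0) -> Dk a b k f ->
  Dk a b k (fun s => / f s).
Proof.
  induction k; simpl; auto. intros f Hnz F.
  pose proof (Dk_S _ _ F) as F0. destruct F as [F1 F2]. split.
  - intros t Ht. eexists. apply is_derive_inv; [apply Derive_correct|]; auto.
  - apply Dk_ext with (fun s => - (Derive f s * (/ f s * / f s))).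
    + intros s Hs. symmetry. rewrite (is_derive_unique _ _ _ (is_derive_inv f s _ (Derive_correct f s (F1 s Hs)) (Hnz s Hs))).
      field. auto.
    + apply Dk_opp, Dk_mult; auto. apply Dk_mult; auto.
Qed.

Lemma Dk_sqrt k : forall f, (forall s, a < s < b -> 0 < f s) -> Dk a b k f ->
  Dk a b k (fun s => sqrt (f s)).
Proof.
  induction k; simpl; auto. intros f Hp F.
  pose proof (Dk_S _ _ F) as F0. destruct F as [F1 F2]. split.
  - intros t Ht. eexists. apply is_derive_sqrt; [apply Derive_correct|]; auto.
  - apply Dk_ext with (fun s => Derive f s * / (2 * sqrt (f s))).
    + intros s Hs. symmetry. apply is_derive_unique.
      exact (is_derive_sqrt f s _ (Derive_correct f s (F1 s Hs)) (Hp s Hs)).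
    + apply Dk_mult; auto. apply Dk_inv.
      * intros s Hs. pose proof (sqrt_lt_R0 _ (Hp s Hs)). lra.
      * apply Dk_mult; [apply Dk_const| auto].
Qed.

Lemma Dk_Derive_n f : (forall n t, a < t < b -> ex_derive_n f n t) ->
  forall k m, Dk a b k (Derive_n f m).
Proof.
  intros H. induction k; simpl; auto. intros m. split.
  - intros t Ht. exact (H (S m) t Ht).
  - exact (IHk (S m)).
Qed.

Definition sm f := forall k, Dk a b k f.

Lemma sm_ext f g : (forall s, a < s < b -> f s = g s) -> sm f -> sm g.
Proof. intros E H k. apply Dk_ext with f; auto. Qed.
Lemma sm_D f : sm f -> sm (Derive f).
Proof. intros H k. exact (proj2 (H (S k))). Qed.
Lemma sm_isd f t : sm f -> a < t < b -> is_derive f t (Derive f t).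
Proof. intros H. apply (Dk_isd O). apply H. Qed.
Lemma sm_const c : sm (fun _ => c).
Proof. intros k; apply Dk_const. Qed.
Lemma sm_plus f g : sm f -> sm g -> sm (fun s => f s + g s).
Proof. intros F G k; apply Dk_plus; auto. Qed.
Lemma sm_opp f : sm f -> sm (fun s => - f s).
Proof. intros F k; apply Dk_opp; auto. Qed.
Lemma sm_minus f g : sm f -> sm g -> sm (fun s => f s - g s).
Proof. intros F G. apply sm_plus; auto. apply sm_opp; auto. Qed.
Lemma sm_mult f g : sm f -> sm g -> sm (fun s => f s * g s).
Proof. intros F G k; apply Dk_mult; auto. Qed.
Lemma sm_inv f : (forall s, a < s < b -> f s <> 0) -> sm f -> sm (fun s => / f s).
Proof. intros N F k; apply Dk_inv; auto. Qed.
Lemma sm_div f g : (forall s, a < s < b -> g s <> 0) -> sm f -> sm g -> sm (fun s => f s / g s).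
Proof. intros N F G. apply sm_mult; auto. apply sm_inv; auto. Qed.
Lemma sm_sqrt f : (forall s, a < s < b -> 0 < f s) -> sm f -> sm (fun s => sqrt (f s)).
Proof. intros N F k; apply Dk_sqrt; auto. Qed.
End Sm.

Lemma vext (u v : vec) : vx u = vx v -> vy u = vy v -> vz u = vz v -> u = v.
Proof. destruct u as [[u1 u2] u3], v as [[v1 v2] v3]; unfold vx, vy, vz; simpl; intros; subst; auto. Qed.

Ltac vdes := repeat match goal with v : vec |- _ => destruct v as [[? ?] ?] end.
Ltac vring := vdes; apply vext; unfold vadd, vscale, cross, dot, mkv, vx, vy, vz; simpl; ring.
Ltac sring := vdes; unfold vadd, vscale, cross, dot, det3, mkv, vx, vy, vz; simpl; ring.

Lemma isd_eqv (f g : R -> R) (t l l' : R) : (forall s, f s = g s) -> is_derive f t l -> l = l' -> is_derive g t l'.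
Proof. intros E H <-. apply is_derive_ext with f; auto. Qed.
Lemma isd_minus (f g : R -> R) (t df dg : R) : is_derive f t df -> is_derive g t dg ->
  is_derive (fun s => f s - g s) t (df - dg).
Proof. intros. apply isd_plus; auto. apply isd_opp; auto. Qed.

Ltac req := match goal with |- ?x = ?y => change (@eq R x y) end.
Section V.
Variables a b : R.

Definition vsm (F : R -> vec) := sm a b (fun s => vx (F s)) /\ sm a b (fun s => vy (F s)) /\ sm a b (fun s => vz (F s)).
Definition vd (F : R -> vec) t (v : vec) :=
  is_derive (fun s => vx (F s)) t (vx v) /\ is_derive (fun s => vy (F s)) t (vy v) /\
  is_derive (fun s => vz (F s)) t (vz v).

Lemma vsm_vd F t : vsm F -> a < t < b -> vd F t (vderive F t).
Proof. intros [X [Y Z]] Ht. split; [|split]; apply (sm_isd a b); auto. Qed.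

Lemma vd_unique F t v : vd F t v -> vderive F t = v.
Proof. intros [X [Y Z]]. apply vext; unfold vderive, mkv, vx, vy, vz in *; simpl; apply is_derive_unique; auto. Qed.

Lemma vsm_vderive F : vsm F -> vsm (vderive F).
Proof. intros [X [Y Z]]. split; [|split]; apply sm_D; auto. Qed.

Lemma vsm_ext F G : (forall s, a < s < b -> F s = G s) -> vsm F -> vsm G.
Proof. intros E [X [Y Z]]. split; [|split].
  - apply sm_ext with (fun s => vx (F s)); auto. intros s Hs; rewrite E; auto.
  - apply sm_ext with (fun s => vy (F s)); auto. intros s Hs; rewrite E; auto.
  - apply sm_ext with (fun s => vz (F s)); auto. intros s Hs; rewrite E; auto. Qed.

Lemma vderive_ext F G t : (forall s, a < s < b -> F s = G s) -> a < t < b -> vderive F t = vderive G t.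
Proof. intros E Ht. unfold vderive. f_equal; apply Derive_ext_loc; apply (loc_eq a b); auto;
  intros s Hs; rewrite E; auto. Qed.

Lemma vsm_add F G : vsm F -> vsm G -> vsm (fun s => vadd (F s) (G s)).
Proof. intros [X [Y Z]] [X' [Y' Z']]. split; [|split]; apply sm_plus; auto. Qed.
Lemma vsm_scale c F : sm a b c -> vsm F -> vsm (fun s => vscale (c s) (F s)).
Proof. intros C [X [Y Z]]. split; [|split]; apply sm_mult; auto. Qed.
Lemma vsm_cross F G : vsm F -> vsm G -> vsm (fun s => cross (F s) (G s)).
Proof. intros [X [Y Z]] [X' [Y' Z']]. split; [|split]; apply sm_minus; apply sm_mult; auto. Qed.
Lemma sm_dot F G : vsm F -> vsm G -> sm a b (fun s => dot (F s) (G s)).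
Proof. intros [X [Y Z]] [X' [Y' Z']]. unfold dot. repeat apply sm_plus; apply sm_mult; auto. Qed.

Lemma vd_add F G t u v : vd F t u -> vd G t v -> vd (fun s => vadd (F s) (G s)) t (vadd u v).
Proof. intros [X [Y Z]] [X' [Y' Z']]. split; [|split]; apply isd_plus; auto. Qed.
Lemma vd_scale c F t c' v : is_derive c t c' -> vd F t v ->
  vd (fun s => vscale (c s) (F s)) t (vadd (vscale c' (F t)) (vscale (c t) v)).
Proof. intros C [X [Y Z]]. split; [|split]; apply isd_mult; auto. Qed.
Lemma vd_cross F G t u v : vd F t u -> vd G t v ->
  vd (fun s => cross (F s) (G s)) t (vadd (cross u (G t)) (cross (F t) v)).
Proof.
  intros [X [Y Z]] [X' [Y' Z']]. split; [|split].
  - eapply (isd_eqv (fun s => vy (F s) * vz (G s) - vz (F s) * vy (G s))); [reflexivity| |].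
    + apply isd_minus; apply isd_mult; eassumption.
    + req; unfold cross, vadd, mkv, vx, vy, vz; simpl; ring.
  - eapply (isd_eqv (fun s => vz (F s) * vx (G s) - vx (F s) * vz (G s))); [reflexivity| |].
    + apply isd_minus; apply isd_mult; eassumption.
    + req; unfold cross, vadd, mkv, vx, vy, vz; simpl; ring.
  - eapply (isd_eqv (fun s => vx (F s) * vy (G s) - vy (F s) * vx (G s))); [reflexivity| |].
    + apply isd_minus; apply isd_mult; eassumption.
    + req; unfold cross, vadd, mkv, vx, vy, vz; simpl; ring.
Qed.
Lemma d_dot F G t u v : vd F t u -> vd G t v ->
  is_derive (fun s => dot (F s) (G s)) t (dot u (G t) + dot (F t) v).
Proof.
  intros [X [Y Z]] [X' [Y' Z']]. unfold dot at 1.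
  eapply (isd_eqv (fun s => vx (F s) * vx (G s) + vy (F s) * vy (G s) + vz (F s) * vz (G s))); [reflexivity| |].
  + apply isd_plus; [apply isd_plus|]; apply isd_mult; eassumption.
  + req; unfold dot; ring.
Qed.
End V.

Definition fc (T N B v : vec) : vec :=
  vadd (vscale (vx v) T) (vadd (vscale (vy v) N) (vscale (vz v) B)).

Lemma fc_dot_gen T N B u v : dot (fc T N B u) (fc T N B v) =
  vx u*vx v*dot T T + vy u*vy v* dot N N + vz u*vz v*dot B B + (vx u*vy v + vy u*vx v)*dot T N
  + (vx u*vz v+vz u*vx v)*dot T B + (vy u*vz v+vz u*vy v)*dot N B.
Proof. unfold fc; sring. Qed.
Lemma cross_gen T N B u v : cross (fc T N B u) (fc T N B v) =
  vadd (vscale (vx u*vy v - vy u*vx v) (cross T N)) (vadd (vscale (vy u*vz v - vz u*vy v) (cross N B))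
   (vscale (vz u*vx v - vx u*vz v) (cross B T))).
Proof. unfold fc; vring. Qed.
Lemma lagrange T N : dot (cross T N) (cross T N) = dot T T * dot N N - dot T N ^ 2.
Proof. sring. Qed.
Lemma dot_TTN T N : dot T (cross T N) = 0. Proof. sring. Qed.
Lemma dot_NTN T N : dot N (cross T N) = 0. Proof. sring. Qed.
Lemma dot_sym u v : dot u v = dot v u. Proof. sring. Qed.
Lemma bac1 T N : cross N (cross T N) = vadd (vscale (dot N N) T) (vscale (- dot N T) N). Proof. vring. Qed.
Lemma bac2 T N : cross (cross T N) T = vadd (vscale (dot T T) N) (vscale (- dot T N) T). Proof. vring. Qed.
Lemma triple_id T N B w : vscale (dot T (cross N B)) w =
  vadd (vscale (dot w T) (cross N B)) (vadd (vscale (dot w N) (cross B T)) (vscale (dot w B) (cross T N))).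
Proof. vring. Qed.
Lemma vscale1 w : vscale 1 w = w. Proof. vring. Qed.
Lemma fc_add T N B u v : vadd (fc T N B u) (fc T N B v) = fc T N B (vadd u v). Proof. unfold fc; vring. Qed.
Lemma fc_scale T N B c u : vscale c (fc T N B u) = fc T N B (vscale c u). Proof. unfold fc; vring. Qed.
Lemma fc_T T N B : T = fc T N B (mkv 1 0 0). Proof. unfold fc; vring. Qed.
Lemma fc_N T N B : N = fc T N B (mkv 0 1 0). Proof. unfold fc; vring. Qed.
Lemma fc_B T N B : B = fc T N B (mkv 0 0 1). Proof. unfold fc; vring. Qed.

Lemma simp10 T N : vadd (vscale 1 T) (vscale (-0) N) = T. Proof. vring. Qed.
Lemma fc_cross_aux T N B u v : vadd (vscale (vx u * vy v - vy u * vx v) B)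
  (vadd (vscale (vy u * vz v - vz u * vy v) T) (vscale (vz u * vx v - vx u * vz v) N)) = fc T N B (cross u v).
Proof. unfold fc; vring. Qed.
Lemma fc_comp_aux T N B w : vadd (vscale (dot w T) T) (vadd (vscale (dot w N) N) (vscale (dot w B) B)) =
  fc T N B (mkv (dot w T) (dot w N) (dot w B)).
Proof. unfold fc. vring. Qed.
Definition frame T N B := dot T T = 1 /\ dot N N = 1 /\ dot T N = 0 /\ B = cross T N.

Section F.
Variables T N B : vec.
Hypothesis HF : frame T N B.
Lemma fr_BB : dot B B = 1.
Proof. destruct HF as [h1 [h2 [h3 ->]]]. rewrite lagrange, h1, h2, h3. ring. Qed.
Lemma fr_TB : dot T B = 0.
Proof. destruct HF as [h1 [h2 [h3 ->]]]. apply dot_TTN. Qed.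
Lemma fr_NB : dot N B = 0.
Proof. destruct HF as [h1 [h2 [h3 ->]]]. apply dot_NTN. Qed.
Lemma fr_NxB : cross N B = T.
Proof. destruct HF as [h1 [h2 [h3 ->]]]. rewrite bac1, h2, dot_sym, h3. apply simp10. Qed.
Lemma fr_BxT : cross B T = N.
Proof. destruct HF as [h1 [h2 [h3 ->]]]. rewrite bac2, h1, h3. apply simp10. Qed.
Lemma fr_TxN : cross T N = B.
Proof. destruct HF as [h1 [h2 [h3 ->]]]. auto. Qed.
Lemma fc_dot u v : dot (fc T N B u) (fc T N B v) = dot u v.
Proof.
  rewrite fc_dot_gen, fr_BB, fr_TB, fr_NB. destruct HF as [h1 [h2 [h3 _]]]. rewrite h1, h2, h3.
  unfold dot. ring.
Qed.
Lemma fc_cross u v : cross (fc T N B u) (fc T N B v) = fc T N B (cross u v).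
Proof.
  rewrite cross_gen, fr_NxB, fr_BxT, fr_TxN. apply fc_cross_aux.
Qed.
Lemma fc_complete w : w = fc T N B (mkv (dot w T) (dot w N) (dot w B)).
Proof.
  pose proof (triple_id T N B w) as E. rewrite fr_NxB, fr_BxT, fr_TxN in E.
  destruct HF as [h1 _]. rewrite h1, vscale1 in E. rewrite E at 1. apply fc_comp_aux.
Qed.
Lemma fc_vnorm u : vnorm (fc T N B u) = vnorm u.
Proof. unfold vnorm. rewrite fc_dot. auto. Qed.
End F.

Lemma dot_self_ge0 v : 0 <= dot v v. Proof. unfold dot; nra. Qed.
Lemma dot_scale_l c u v : dot (vscale c u) v = c * dot u v. Proof. sring. Qed.
Lemma dot_scale_r c u v : dot u (vscale c v) = c * dot u v. Proof. sring. Qed.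
Lemma scale_inv k v : k <> 0 -> v = vscale k (vscale (/k) v).
Proof. intros H. vdes. apply vext; unfold vscale, mkv, vx, vy, vz; simpl; field; auto. Qed.

Lemma Bp_mkv k tau : vadd (cross (vscale k (mkv 0 1 0)) (mkv 0 1 0)) (cross (mkv 1 0 0) (mkv (-k) 0 tau)) = mkv 0 (-tau) 0.
Proof. apply vext; unfold vadd, vscale, cross, mkv, vx, vy, vz; simpl; ring. Qed.

Lemma Bp_aux T N B k tau : frame T N B ->
  vadd (cross (vscale k N) N) (cross T (fc T N B (mkv (-k) 0 tau))) = fc T N B (mkv 0 (-tau) 0).
Proof.
  intros HF.
  assert (forall N1 T1, N1 = fc T N B (mkv 0 1 0) -> T1 = fc T N B (mkv 1 0 0) ->
    vadd (cross (vscale k N1) N1) (cross T1 (fc T N B (mkv (-k) 0 tau))) = fc T N B (mkv 0 (-tau) 0)) as H.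
  { intros N1 T1 -> ->. rewrite fc_scale, !(fc_cross _ _ _ HF), fc_add. rewrite Bp_mkv. reflexivity. }
  apply H; [apply fc_N | apply fc_T].
Qed.

Lemma E_aux T N B k tau r' rho' : k <> 0 -> tau <> 0 ->
  vadd T (vadd (vadd (vscale r' N) (vscale (/k) (fc T N B (mkv (-k) 0 tau))))
    (vadd (vscale rho' B) (vscale (r'/tau) (fc T N B (mkv 0 (-tau) 0))))) = vscale (/k * tau + rho') B.
Proof. intros. unfold fc. vdes. apply vext; unfold vadd, vscale, mkv, vx, vy, vz; simpl; field; auto. Qed.

Lemma E2_aux T N B s s' tau : vadd (vscale s' B) (vscale s (fc T N B (mkv 0 (-tau) 0))) = fc T N B (mkv 0 (-(s*tau)) s').
Proof. unfold fc; vring. Qed.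
Lemma E2_back T N B s s' tau : fc T N B (mkv 0 (-(s*tau)) s') = vadd (vscale s' B) (vscale (s * - tau) N).
Proof. unfold fc; vring. Qed.
Lemma E3_aux T N B k tau s s1 s2 c :
  vadd (vadd (vscale s2 B) (vscale s1 (fc T N B (mkv 0 (-tau) 0))))
       (vadd (vscale c N) (vscale (s * - tau) (fc T N B (mkv (-k) 0 tau)))) =
  fc T N B (mkv (s*tau*k) (c - s1*tau) (s2 - s*tau*tau)).
Proof. unfold fc; vring. Qed.
Lemma E1_fc T N B s : vscale s B = fc T N B (mkv 0 0 s). Proof. unfold fc; vring. Qed.
Lemma vnorm00 s : vnorm (mkv 0 0 s) = Rabs s.
Proof. unfold vnorm, dot, mkv, vx, vy, vz; simpl. rewrite <- sqrt_Rsqr_abs. f_equal. unfold Rsqr; ring. Qed.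
Lemma vnormx0 s : vnorm (mkv s 0 0) = Rabs s.
Proof. unfold vnorm, dot, mkv, vx, vy, vz; simpl. rewrite <- sqrt_Rsqr_abs. f_equal. unfold Rsqr; ring. Qed.
Lemma cross12 s tau s' : cross (mkv 0 0 s) (mkv 0 (-(s*tau)) s') = mkv (s*s*tau) 0 0.
Proof. apply vext; unfold vadd, vscale, cross, mkv, vx, vy, vz; simpl; ring. Qed.
Lemma det123 s tau s' k be ga : dot (mkv 0 0 s) (cross (mkv 0 (-(s*tau)) s') (mkv (s*tau*k) be ga)) = s*s*tau*s*tau*k.
Proof. unfold vadd, vscale, dot, cross, mkv, vx, vy, vz; simpl; ring. Qed.

Lemma const_deriv a b (f : R -> R) C t l : (forall s, a < s < b -> f s = C) -> a < t < b ->
  is_derive f t l -> l = 0.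
Proof.
  intros E Ht H.
  assert (H2 : is_derive (fun _ => C) t l).
  { apply is_derive_ext_loc with f; auto. apply (loc_eq a b f (fun _ => C) t); auto. }
  apply is_derive_unique in H2. rewrite <- H2. apply is_derive_unique, isd_const.
Qed.

Section G.
Variables (xi : R -> vec) (a b : R).
Hypothesis Hsm : vsm a b xi.
Hypothesis Hunit : forall s, a < s < b -> vnorm (vderive xi s) = 1.
Hypothesis Hk : forall s, a < s < b -> 0 < curvature xi s.
Hypothesis Htau : forall s, a < s < b -> torsion xi s <> 0.
Hypothesis Hsig : forall s, a < s < b -> sigma_fn xi s <> 0.

Local Notation T := (vderive xi).
Local Notation X2 := (vderive (vderive xi)).
Local Notation K := (curvature xi).
Local Notation N := (normal xi).
Local Notation B := (binormal xi).
Local Notation tau := (torsion xi).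
Local Notation r := (radius xi).
Local Notation rho := (fun s => Derive (radius xi) s / torsion xi s).
Local Notation sig := (sigma_fn xi).
Local Notation E := (evolute xi).

Lemma vsmT : vsm a b T. Proof. apply vsm_vderive; auto. Qed.
Lemma vsmX2 : vsm a b X2. Proof. apply vsm_vderive, vsmT. Qed.

Lemma TT s : a < s < b -> dot (T s) (T s) = 1.
Proof.
  intros Hs. pose proof (Hunit s Hs) as H. unfold vnorm in H.
  rewrite <- (sqrt_sqrt (dot (T s) (T s))) by apply dot_self_ge0. rewrite H; ring.
Qed.

Lemma TX2 s : a < s < b -> dot (T s) (X2 s) = 0.
Proof.
  intros Hs.
  pose proof (d_dot _ _ _ _ _ (vsm_vd a b T s vsmT Hs) (vsm_vd a b T s vsmT Hs)) as H.
  apply (const_deriv a b _ 1) in H; auto. rewrite (dot_sym (X2 s)) in H. lra.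
  intros; apply TT; auto.
Qed.

Lemma KK s : K s * K s = dot (X2 s) (X2 s).
Proof. unfold curvature, vnorm. apply sqrt_sqrt, dot_self_ge0. Qed.

Lemma X2pos s : a < s < b -> 0 < dot (X2 s) (X2 s).
Proof. intros Hs. rewrite <- KK. pose proof (Hk s Hs). nra. Qed.

Lemma frameI s : a < s < b -> frame (T s) (N s) (B s).
Proof.
  intros Hs. pose proof (Hk s Hs). unfold frame, normal, binormal, tangent.
  split; [apply TT; auto|]. split; [|split].
  - rewrite dot_scale_l, dot_scale_r, <- KK. field. lra.
  - rewrite dot_scale_r, TX2; auto. ring.
  - reflexivity.
Qed.

Lemma X2_KN s : a < s < b -> X2 s = vscale (K s) (N s).
Proof. intros Hs. unfold normal. apply scale_inv. pose proof (Hk s Hs). lra. Qed.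

Lemma smK : sm a b K.
Proof. change (sm a b (fun s => sqrt (dot (X2 s) (X2 s)))). apply sm_sqrt; [apply X2pos|].
  apply sm_dot; apply vsmX2. Qed.
Lemma smr : sm a b r.
Proof. change (sm a b (fun s => / K s)). apply sm_inv; [|apply smK]. intros s Hs; pose proof (Hk s Hs); lra. Qed.
Lemma vsmN : vsm a b N.
Proof. change (vsm a b (fun s => vscale (r s) (X2 s))). apply vsm_scale; [apply smr| apply vsmX2]. Qed.
Lemma vsmB : vsm a b B.
Proof. change (vsm a b (fun s => cross (T s) (N s))). apply vsm_cross; [apply vsmT| apply vsmN]. Qed.
Lemma smtau : sm a b tau.
Proof. change (sm a b (fun s => dot (vderive N s) (B s))). apply sm_dot; [apply vsm_vderive, vsmN| apply vsmB]. Qed.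
Lemma smrho : sm a b rho.
Proof. apply sm_div; auto. apply sm_D, smr. apply smtau. Qed.
Lemma smsig : sm a b sig.
Proof. change (sm a b (fun s => r s * tau s + Derive rho s)). apply sm_plus.
  apply sm_mult; [apply smr| apply smtau]. apply sm_D, smrho. Qed.

Lemma Nprime s : a < s < b -> vderive N s = fc (T s) (N s) (B s) (mkv (- K s) 0 (tau s)).
Proof.
  intros Hs.
  transitivity (fc (T s) (N s) (B s) (mkv (dot (vderive N s) (T s)) (dot (vderive N s) (N s)) (dot (vderive N s) (B s)))).
  { apply fc_complete, frameI; auto. }
  pose proof (frameI s Hs) as [h1 [h2 [h3 h4]]].
  apply f_equal. f_equal.
  - pose proof (d_dot _ _ _ _ _ (vsm_vd a b N s vsmN Hs) (vsm_vd a b T s vsmT Hs)) as H.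
    apply (const_deriv a b _ 0) in H; auto.
    + rewrite X2_KN, dot_scale_r, h2 in H; auto. lra.
    + intros u Hu. destruct (frameI u Hu) as [_ [_ [e _]]]. rewrite dot_sym; auto.
  - pose proof (d_dot _ _ _ _ _ (vsm_vd a b N s vsmN Hs) (vsm_vd a b N s vsmN Hs)) as H.
    apply (const_deriv a b _ 1) in H; auto.
    + rewrite (dot_sym (N s)) in H. lra.
    + intros u Hu. destruct (frameI u Hu) as [_ [e _]]. auto.
Qed.

Lemma Bprime s : a < s < b -> vderive B s = fc (T s) (N s) (B s) (mkv 0 (- tau s) 0).
Proof.
  intros Hs.
  transitivity (vadd (cross (X2 s) (N s)) (cross (T s) (vderive N s))).
  { apply vd_unique. change (vd (fun s => cross (T s) (N s)) s (vadd (cross (X2 s) (N s)) (cross (T s) (vderive N s)))).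
    apply vd_cross; apply (vsm_vd a b); auto. apply vsmT. apply vsmN. }
  rewrite X2_KN, Nprime; auto. apply Bp_aux, frameI; auto.
Qed.

Lemma Eprime s : a < s < b -> vderive E s = vscale (sig s) (B s).
Proof.
  intros Hs.
  transitivity (vadd (T s) (vadd (vadd (vscale (Derive r s) (N s)) (vscale (r s) (vderive N s)))
     (vadd (vscale (Derive rho s) (B s)) (vscale (rho s) (vderive B s))))).
  { apply vd_unique. change (vd (fun s => vadd (xi s) (vadd (vscale (r s) (N s)) (vscale (rho s) (B s)))) s
      (vadd (T s) (vadd (vadd (vscale (Derive r s) (N s)) (vscale (r s) (vderive N s)))
     (vadd (vscale (Derive rho s) (B s)) (vscale (rho s) (vderive B s)))))).
    apply vd_add; [apply (vsm_vd a b); auto|]. apply vd_add; [apply (vd_scale r)|apply (vd_scale (fun s => Derive r s / tau s))].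
    - apply (sm_isd a b); auto. apply smr.
    - apply (vsm_vd a b); auto. apply vsmN.
    - apply (sm_isd a b); auto. apply smrho.
    - apply (vsm_vd a b); auto. apply vsmB. }
  rewrite Nprime, Bprime; auto. unfold sigma_fn. unfold radius at 2 4. cbv beta.
  apply E_aux; auto. pose proof (Hk s Hs); lra.
Qed.

Lemma E2 t : a < t < b -> vderive (vderive E) t = fc (T t) (N t) (B t) (mkv 0 (-(sig t * tau t)) (Derive sig t)).
Proof.
  intros Ht.
  rewrite (vderive_ext a b (vderive E) (fun s => vscale (sig s) (B s)) t Eprime Ht).
  transitivity (vadd (vscale (Derive sig t) (B t)) (vscale (sig t) (vderive B t))).
  { apply vd_unique, vd_scale. apply (sm_isd a b); auto. apply smsig. apply (vsm_vd a b); auto. apply vsmB. }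
  rewrite Bprime; auto. apply E2_aux.
Qed.

Lemma E3 t : a < t < b -> exists be ga,
  vderive (vderive (vderive E)) t = fc (T t) (N t) (B t) (mkv (sig t * tau t * K t) be ga).
Proof.
  intros Ht.
  assert (HE : forall s, a < s < b -> vderive (vderive E) s = vadd (vscale (Derive sig s) (B s)) (vscale (sig s * - tau s) (N s))).
  { intros s Hs. rewrite E2; auto. apply E2_back. }
  rewrite (vderive_ext a b _ _ t HE Ht).
  eexists; eexists.
  transitivity (vadd (vadd (vscale (Derive (Derive sig) t) (B t)) (vscale (Derive sig t) (vderive B t)))
     (vadd (vscale (Derive (fun s => sig s * - tau s) t) (N t)) (vscale (sig t * - tau t) (vderive N t)))).
  { apply vd_unique. apply vd_add; [apply (vd_scale (Derive sig))|apply (vd_scale (fun s => sig s * - tau s))].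
    - apply (sm_isd a b); auto. apply sm_D, smsig.
    - apply (vsm_vd a b); auto. apply vsmB.
    - apply (sm_isd a b); auto. apply sm_mult; [apply smsig| apply sm_opp, smtau].
    - apply (vsm_vd a b); auto. apply vsmN. }
  rewrite Bprime, Nprime; auto. apply E3_aux.
Qed.

Lemma pt1 t : a < t < b -> gen_curvature E t * vnorm (vderive E t) = Rabs (tau t).
Proof.
  intros Ht. pose proof (frameI t Ht) as HF. pose proof (Hsig t Ht) as Hs.
  unfold gen_curvature. rewrite E2, Eprime; auto.
  rewrite (E1_fc (T t) (N t) (B t)), (fc_cross _ _ _ HF), !(fc_vnorm _ _ _ HF), cross12, vnorm00, vnormx0.
  rewrite !Rabs_mult. assert (Rabs (sig t) <> 0) by (apply Rabs_no_R0; auto).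
  field; auto.
Qed.

Lemma pt2 t : a < t < b -> gen_torsion E t * vnorm (vderive E t) = sgn (sig t) * K t.
Proof.
  intros Ht. pose proof (frameI t Ht) as HF. pose proof (Hsig t Ht) as Hs. pose proof (Htau t Ht) as Hta.
  destruct (E3 t Ht) as [be [ga H3]].
  unfold gen_torsion, det3. rewrite H3, E2, Eprime; auto.
  rewrite (E1_fc (T t) (N t) (B t)), !(fc_cross _ _ _ HF), !(fc_vnorm _ _ _ HF), (fc_dot _ _ _ HF),
    cross12, vnorm00, vnormx0, det123.
  rewrite pow2_abs. unfold sgn.
  destruct (Rlt_dec 0 (sig t)).
  - rewrite Rabs_right by lra. field. split; auto.
  - destruct (Rlt_dec (sig t) 0); [|lra].
    rewrite (Rabs_left (sig t)) by lra. field. split; auto.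
Qed.
End G.

Lemma vsm_of_smooth (xi : R -> vec) a b c d : c < a -> b < d -> smooth_on c d xi -> vsm a b xi.
Proof.
  intros H1 H2 H. split; [|split]; intros k.
  - apply (Dk_Derive_n a b (fun s => vx (xi s))) with (m := O).
    intros n t Ht. refine (proj1 (H n t _)). lra.
  - apply (Dk_Derive_n a b (fun s => vy (xi s))) with (m := O).
    intros n t Ht. refine (proj1 (proj2 (H n t _))). lra.
  - apply (Dk_Derive_n a b (fun s => vz (xi s))) with (m := O).
    intros n t Ht. refine (proj2 (proj2 (H n t _))). lra.
Qed.

Theorem mainTheorem6 (xi : R -> vec) (a b c d : R) :
  c < a -> a < b -> b < d ->
  smooth_on c d xi ->
  (forall t, a <= t <= b -> vnorm (vderive xi t) = 1) ->
  (forall t, a <= t <= b -> 0 < curvature xi t) ->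
  (forall t, a <= t <= b -> torsion xi t <> 0) ->
  (forall t, a <= t <= b -> sigma_fn xi t <> 0) ->
  RInt (fun t => gen_curvature (evolute xi) t * vnorm (vderive (evolute xi) t)) a b
    = RInt (fun t => Rabs (torsion xi t)) a b /\
  RInt (fun t => gen_torsion (evolute xi) t * vnorm (vderive (evolute xi) t)) a b
    = RInt (fun t => sgn (sigma_fn xi t) * curvature xi t) a b.
Proof.
  intros Hca Hab Hbd Hs Hu Hk Ht Hsg.
  assert (Hv : vsm a b xi) by (apply (vsm_of_smooth xi a b c d); auto).
  assert (Hu' : forall s, a < s < b -> vnorm (vderive xi s) = 1) by (intros; apply Hu; lra).
  assert (Hk' : forall s, a < s < b -> 0 < curvature xi s) by (intros; apply Hk; lra).
  assert (Ht' : forall s, a < s < b -> torsion xi s <> 0) by (intros; apply Ht; lra).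
  assert (Hsg' : forall s, a < s < b -> sigma_fn xi s <> 0) by (intros; apply Hsg; lra).
  split; apply RInt_ext; rewrite Rmin_left, Rmax_right by lra; intros x Hx.
  - eapply pt1; eauto.
  - eapply pt2; eauto.
Qed.
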